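(* Fix $\eta\ge 2$, $\kappa>0$, transmit power $P'>0$ and $N>0$. For each $T\ge 3$ consider the $T$-node Gaussian multiple relay channel in which the nodes $1,\dots,T$ lie on a line with consecutive spacing $1$ (so $d_{it}=|i-t|$), every transmitting node has power constraint $E[X_i^2]\le P'$, and the noise variances satisfy $N_t\le N$. Then there is a constant $c>0$ depending only on $\eta,\kappa,P',N$ (not on $T$) such that, for every $T$, the two-hop myopic achievable rate of Theorem 1 (with jointly Gaussian inputs, $X_t$ a linear combination of independent Gaussian $U_t,U_{t+1}$ with a power split) is at least $c$; in particular two-hop myopic coding rates stay bounded away from zero as $T\to\infty$.
   Context: The Gaussian multiple relay channel is $Y_t=\sum_{i=1,\,i\ne t}^{T-1}\sqrt{\kappa d_{it}^{-\eta}}\,X_i+Z_t$ for $t=2,\dots,T$, where $Z_t\sim\mathcal N(0,N_t)$ are independent of the inputs and of each other, $d_{it}$ is the distance between nodes $i$ and $t$, and $\eta$ is the path loss exponent. The two-hop achievable rate is $\min_{t\in\{2,\dots,T\}} I(U_{t-2},U_{t-1};Y_t\mid U_t,U_{t+1})$ with $U_0=U_T=U_{T+1}=0$, where $U_1,\dots,U_{T-1}$ are independent, $X_t$ is a function of $(U_t,U_{t+1})$ for $t\le T-2$ and $X_{T-1}$ a function of $U_{T-1}$; signals of nodes not in $\{U_{t-2},\dots,U_{t+1}\}$ are treated as noise at node $t$. *)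

(* Defs.v *)
From mathcomp Require Import all_boot all_order all_algebra.
From mathcomp Require Import reals exp.
Set Implicit Arguments. Unset Strict Implicit. Unset Printing Implicit Defensive.
Import Order.TTheory GRing.Theory Num.Theory.
Local Open Scope ring_scope.

Section GaussRelay.
Variable R : realType.

Definition node_dist (i t : nat) : nat := ((i - t) + (t - i))%N.

Definition gain (kappa eta : R) (i t : nat) : R :=
  Num.sqrt (kappa * powR (node_dist i t)%:R (- eta)).

(* Inputs: U_1, ..., U_{T-1} independent standard Gaussians (U_0 = U_T = U_{T+1} = 0).
   X_i = a i * U_i + b i * U_{i+1} for 1 <= i <= T-2, and X_{T-1} = a (T-1) * U_{T-1}.
   xcoef T a b i j = coefficient of U_j in X_i. *)
Definition xcoef (T : nat) (a b : nat -> R) (i j : nat) : R :=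
  if j == i then a i
  else if (j == i.+1) && (i <= T - 2)%N then b i else 0.

(* Coefficient of U_j in Y_t = sum_{1 <= i <= T-1, i <> t} gain i t * X_i + Z_t. *)
Definition ycoef (kappa eta : R) (T : nat) (a b : nat -> R) (t j : nat) : R :=
  \sum_(1 <= i < T | i != t) gain kappa eta i t * xcoef T a b i j.

(* Conditional mutual information I(U_A ; Y | U_B) (in nats) for
   Y = sum_{1<=j<T} c j U_j + Z, with U_j iid N(0,1) and Z ~ N(0, Nz) independent:
   (1/2) ln( Var(Y | U_B) / Var(Y | U_A, U_B) ). *)
Definition gauss_cmi (T : nat) (c : nat -> R) (A B : pred nat) (Nz : R) : R :=
  (1 / 2) * ln ((\sum_(1 <= j < T | ~~ B j) c j ^+ 2 + Nz) /
                (\sum_(1 <= j < T | ~~ A j && ~~ B j) c j ^+ 2 + Nz)).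

(* Rate constraint at node t:  I(U_{t-2}, U_{t-1} ; Y_t | U_t, U_{t+1}). *)
Definition hop_rate (kappa eta : R) (T : nat) (a b Nt : nat -> R) (t : nat) : R :=
  gauss_cmi T (ycoef kappa eta T a b t)
    (fun j => (j == t - 2)%N || (j == t - 1)%N)
    (fun j => (j == t)%N || (j == t.+1)%N)
    (Nt t).

End GaussRelay.

(* Main.v *)
Require Import Defs.
From mathcomp Require Import all_boot all_order all_algebra.
From mathcomp Require Import reals exp ring lra zify.
Import Order.TTheory GRing.Theory Num.Theory.
Local Open Scope ring_scope.

Section Aux.
Variable R : realType.

Lemma key_ineq (eta d : R) : 2 <= eta -> 2 <= d ->
  powR d (- eta) <= (d - 1)^-1 - d^-1.
Proof.
move=> he hd.
have d1 : 1 <= d by lra.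
have H : powR d (- eta) <= powR d (- 2%:R).
  by apply: ler_powR => //; lra.
apply: le_trans H _.
rewrite powR_invn; last lra.
have -> : (d - 1)^-1 - d^-1 = ((d - 1) * d)^-1.
  by field; apply/andP; split; apply/eqP; lra.
rewrite lef_pV2 ?posrE; last 2 first.
- by apply: exprn_gt0; lra.
- by apply: mulr_gt0; lra.
rewrite expr2; nra.
Qed.

Lemma key_ge0 (eta d : R) : 2 <= eta -> 2 <= d -> 0 <= (d - 1)^-1 - d^-1.
Proof. move=> he hd; have := @key_ineq eta d he hd; have := @powR_ge0 R d (- eta); lra. Qed.

Definition phi (t j : nat) : R :=
  if (j < t)%N then (t%:R - j%:R)^-1
  else if (j <= t.+1)%N then 2 else 3 - (j%:R - t%:R - 1)^-1.

Lemma nd_lt j t : (j < t)%N -> (node_dist j t)%:R = t%:R - j%:R :> R.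
Proof.
move=> h; rewrite /node_dist.
have -> : (j - t = 0)%N by lia.
by rewrite add0n natrB // ltnW.
Qed.

Lemma nd_gt j t : (t <= j)%N -> (node_dist j t)%:R = j%:R - t%:R :> R.
Proof.
move=> h; rewrite /node_dist.
have -> : (t - j = 0)%N by lia.
by rewrite addn0 natrB.
Qed.

Lemma phi_step (eta : R) t j : 2 <= eta ->
  (0 <= phi t j.+1 - phi t j) /\
  ((j.+1 < t)%N || (t.+2 <= j)%N ->
    powR (node_dist j t)%:R (- eta) <= phi t j.+1 - phi t j).
Proof.
move=> he; rewrite /phi.
have [h|h] : (j.+1 < t)%N \/ (t <= j.+1)%N by lia.
  rewrite h (ltnW h) -addn1 natrD.
  have hd : 2 <= t%:R - j%:R :> R.
    have : ((j + 2)%:R <= t%:R :> R) by rewrite ler_nat; lia.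
    rewrite natrD; lra.
  have -> : t%:R - (j%:R + 1) = (t%:R - j%:R) - 1 :> R by ring.
  split; first exact: (key_ge0 _ _ he hd).
  by move=> _; rewrite nd_lt ?(ltnW h) //; apply: key_ineq.
have [h1|h1] : (j < t)%N \/ (t <= j)%N by lia.
  have -> : (j.+1 < t)%N = false by lia.
  rewrite h1.
  have -> : (j < t.+1)%N by lia.
  have -> : t%:R - j%:R = 1 :> R.
    have -> : t = (j + 1)%N by lia.
    by rewrite natrD; ring.
  rewrite invr1; split; first lra.
  by move=> /orP[] //; lia.
have -> : (j.+1 < t)%N = false by lia.
have -> : (j < t)%N = false by lia.
have [h2|h2] : (t.+2 <= j)%N \/ (j < t.+2)%N by lia.
  have -> : (j.+1 <= t.+1)%N = false by lia.
  have -> : (j <= t.+1)%N = false by lia.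
  have hd : 2 <= j%:R - t%:R :> R.
    have : ((t + 2)%:R <= j%:R :> R) by rewrite ler_nat; lia.
    rewrite natrD; lra.
  have -> : 3 - ((j.+1)%:R - t%:R - 1) ^-1 - (3 - (j%:R - t%:R - 1)^-1)
     = (j%:R - t%:R - 1)^-1 - (j%:R - t%:R)^-1 :> R.
    have -> : (j.+1)%:R - t%:R - 1 = j%:R - t%:R :> R by rewrite -addn1 natrD; ring.
    ring.
  split; first exact: (key_ge0 _ _ he hd).
  by move=> _; rewrite nd_gt; [apply: key_ineq| lia].
have -> : (j <= t.+1)%N by lia.
have [e|e] := boolP (j == t.+1).
  rewrite (eqP e) ltnn.
  have -> : (t.+2)%:R - t%:R - 1 = 1 :> R.
    by rewrite -addn2 natrD; ring.
  rewrite invr1; split; first lra.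
  move=> /orP[]; lia.
have -> : (j.+1 <= t.+1)%N by lia.
split; first lra.
move=> /orP[]; lia.
Qed.

Lemma phi_bnd t j : 0 <= phi t j <= 3.
Proof.
rewrite /phi.
have [h|h] : (j < t)%N \/ (t <= j)%N by lia.
  have hd : 1 <= t%:R - j%:R :> R.
    have : ((j + 1)%:R <= t%:R :> R) by rewrite ler_nat; lia.
    rewrite natrD; lra.
  have p : 0 < t%:R - j%:R :> R by lra.
  rewrite h invr_ge0 (ltW p) /=.
  have : (t%:R - j%:R)^-1 <= 1 :> R by rewrite invf_le1.
  lra.
have -> : (j < t)%N = false by lia.
case: ifP => h2; first (apply/andP; split; lra).
have hd : 1 <= j%:R - t%:R - 1 :> R.
  have : ((t + 2)%:R <= j%:R :> R) by rewrite ler_nat; lia.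
  rewrite natrD; lra.
have p : 0 < j%:R - t%:R - 1 :> R by lra.
have : (j%:R - t%:R - 1)^-1 <= 1 :> R by rewrite invf_le1.
have : 0 <= (j%:R - t%:R - 1)^-1 :> R by rewrite invr_ge0 ltW.
move=> a b; apply/andP; split; lra.
Qed.
Lemma cmi_lb (T : nat) (c : nat -> R) (A B : pred nat) (Nz K M : R) j0 :
  0 < Nz -> 0 <= K -> (1 <= j0 < T)%N -> A j0 -> ~~ B j0 -> K <= c j0 ^+ 2 ->
  \sum_(1 <= j < T | ~~ A j && ~~ B j) c j ^+ 2 + Nz <= M ->
  (1/2) * ln (1 + K / M) <= gauss_cmi T c A B Nz.
Proof.
move=> hNz hK hj0 hA hB hc hM; rewrite /gauss_cmi.
set D := \sum_(1 <= j < T | ~~ A j && ~~ B j) c j ^+ 2.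
set Nm := \sum_(1 <= j < T | ~~ B j) c j ^+ 2.
have hD : 0 <= D by apply: sumr_ge0 => j _; exact: sqr_ge0.
have hND : D + K <= Nm.
  rewrite /Nm (bigID A) /=.
  have -> : \sum_(1 <= j < T | ~~ B j && ~~ A j) c j ^+ 2 = D.
    by apply: eq_bigl => j; rewrite andbC.
  rewrite big_mkcond (bigD1_seq j0) /= ?mem_index_iota ?iota_uniq //.
  rewrite hB hA /=.
  have : 0 <= \sum_(i <- index_iota 1 T | i != j0)
      (if ~~ B i && A i then c i ^+ 2 else 0).
    by apply: sumr_ge0 => i _; case: ifP => _ //; exact: sqr_ge0.
  lra.
have hM' : D + Nz <= M := hM.
have hM0 : 0 < M by lra.
have hKM : 0 <= K / M by apply: divr_ge0 => //; exact: ltW.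
apply: ler_wpM2l; first lra.
rewrite ler_ln ?posrE; last 2 first.
- lra.
- by apply: divr_gt0; lra.
rewrite ler_pdivlMr; last lra.
have : K / M * (D + Nz) <= K.
  rewrite mulrAC ler_pdivrMr //.
  by apply: ler_wpM2l.
lra.
Qed.

End Aux.

Theorem mainTheorem3 (R : realType) (eta kappa P' N : R) :
  2 <= eta -> 0 < kappa -> 0 < P' -> 0 < N ->
  exists c : R, 0 < c /\
    forall (T : nat), (3 <= T)%N ->
    forall Nt : nat -> R, (forall t, (2 <= t <= T)%N -> 0 < Nt t <= N) ->
    exists a b : nat -> R,
      (forall i, (1 <= i <= T - 2)%N -> a i ^+ 2 + b i ^+ 2 <= P') /\
      a (T - 1)%N ^+ 2 <= P' /\
      forall t, (2 <= t <= T)%N -> c <= hop_rate kappa eta T a b Nt t.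
Proof.
move=> he hk hP hN.
have hK : 0 < kappa * P' by apply: mulr_gt0.
exists ((1/2) * ln (1 + kappa * P' / (3 * (kappa * P') + N))).
split.
  apply: mulr_gt0; first lra.
  apply: ln_gt0.
  have : 0 < kappa * P' / (3 * (kappa * P') + N) by apply: divr_gt0; lra.
  lra.
move=> T hT Nt hNt.
pose s := Num.sqrt P'.
have s2 : s ^+ 2 = P' by rewrite sqr_sqrtr // ltW.
exists (fun _ => s), (fun _ => 0).
split.
  by move=> i _; rewrite s2 expr2 mulr0 addr0.
split; first by rewrite s2.
move=> t ht.
have hy : forall j, (1 <= j < T)%N ->
    ycoef kappa eta T (fun _ => s) (fun _ => 0) t j =
    if j != t then gain kappa eta j t * s else 0.
  move=> j hj; rewrite /ycoef big_mkcond /=.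
  rewrite (bigD1_seq j) /= ?mem_index_iota ?iota_uniq //.
  rewrite big1_seq ?addr0.
    by rewrite /xcoef eqxx.
  move=> i /andP[hij _].
  by rewrite /xcoef [j == i]eq_sym (negbTE hij) if_same mulr0 if_same.
have hc2 : forall j, (1 <= j < T)%N -> j != t ->
    ycoef kappa eta T (fun _ => s) (fun _ => 0) t j ^+ 2 =
    kappa * P' * powR (node_dist j t)%:R (- eta).
  move=> j hj hjt; rewrite hy // hjt exprMn s2 /gain sqr_sqrtr.
    by rewrite mulrAC.
  by apply: mulr_ge0; [exact: ltW | exact: powR_ge0].
have [hNt0 hNtN] : 0 < Nt t /\ Nt t <= N by have /andP[] := hNt t ht.
apply: (@cmi_lb R T _ _ _ (Nt t) (kappa * P') _ (t - 1)%N) => //=.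
- exact: ltW.
- by lia.
- by rewrite eqxx orbT.
- by apply/negP => /orP[] /eqP; lia.
- rewrite hc2; [| lia | apply/negP => /eqP; lia].
  have -> : node_dist (t - 1) t = 1%N by rewrite /node_dist; lia.
  by rewrite powR1 mulr1.
have : \sum_(1 <= j < T | ~~ ((j == t - 2)%N || (j == t - 1)%N) &&
          ~~ ((j == t)%N || (j == t.+1)%N))
         ycoef kappa eta T (fun _ => s) (fun _ => 0) t j ^+ 2
       <= 3 * (kappa * P').
  rewrite big_mkcond /=.
  apply: (@le_trans _ _ (\sum_(1 <= j < T) (kappa * P') * (phi R t j.+1 - phi R t j))).
    apply: ler_sum_nat => j hj.
    have [st1 st2] := @phi_step R eta t j he.
    case: ifP => hc.
      have hjt : j != t by apply/negP => /eqP; move: hc; lia.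
      rewrite hc2 //; apply: ler_wpM2l; first exact: ltW.
      by apply: st2; move: hc; lia.
    by apply: mulr_ge0 => //; exact: ltW.
  rewrite -mulr_sumr telescope_sumr; last lia.
  have /andP[a1 a2] := phi_bnd R t T.
  have /andP[b1 b2] := phi_bnd R t 1.
  rewrite [3 * _]mulrC; apply: ler_wpM2l; first exact: ltW.
  lra.
lra.
Qed.
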